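(* There is an absolute constant $C$ such that for every $n\ge 2$ and every family $\mathcal{F}$ of $n$ axis-parallel closed rectangles in the plane with intersection graph $G$, we have $\chi_{CF}^{cn}(G)\le C\log n$.
   Context: The intersection graph of $\mathcal{F}$ has vertex set $\mathcal{F}$, with distinct $R_1,R_2$ adjacent iff $R_1\cap R_2\neq\emptyset$. $\chi_{CF}^{cn}(G)$ is the minimum number of colors in a coloring of $V(G)$ such that for every vertex $v$, the closed neighborhood $N_G[v]=\{v\}\cup\{u:\{u,v\}\in E(G)\}$ contains a vertex whose color differs from the colors of all other vertices of $N_G[v]$. *)

(* Defs.v *)
From Stdlib Require Import Reals.
Open Scope R_scope.

Record rect := mkRect { rx1 : R; rx2 : R; ry1 : R; ry2 : R }.

Definition rect_wf (r : rect) : Prop := rx1 r <= rx2 r /\ ry1 r <= ry2 r.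

Definition in_rect (x y : R) (r : rect) : Prop :=
  rx1 r <= x <= rx2 r /\ ry1 r <= y <= ry2 r.

Definition rect_meet (r s : rect) : Prop :=
  exists x y, in_rect x y r /\ in_rect x y s.

(* A simple graph on vertex set {0,...,n-1} is given by a relation adj;
   closed neighbourhood of v. *)
Definition closed_nbhd (n : nat) (adj : nat -> nat -> Prop) (v u : nat) : Prop :=
  (u < n)%nat /\ (u = v \/ adj v u).

Definition cf_cn_coloring (n : nat) (adj : nat -> nat -> Prop) (k : nat)
  (c : nat -> nat) : Prop :=
  (forall v, (v < n)%nat -> (c v < k)%nat) /\
  (forall v, (v < n)%nat ->
     exists u, closed_nbhd n adj v u /\
       forall w, closed_nbhd n adj v w -> w <> u -> c w <> c u).

Definition is_chi_cf_cn (n : nat) (adj : nat -> nat -> Prop) (k : nat) : Prop :=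
  (exists c, cf_cn_coloring n adj k c) /\
  (forall k' c', cf_cn_coloring n adj k' c' -> (k <= k')%nat).

Definition rect_adj (F : nat -> rect) (i j : nat) : Prop :=
  i <> j /\ rect_meet (F i) (F j).

(* Main.v *)
Require Import Defs.
From Stdlib Require Import Reals List Lia Lra Arith ClassicalEpsilon.
Open Scope nat_scope.

Fixpoint findlev (a b k : nat) : nat :=
  match k with
  | O => O
  | S k' => if Nat.leb a (b / 2^k * 2^k) then k else findlev a b k'
  end.

Lemma findlev_le a b k : findlev a b k <= k.
Proof. induction k; cbn [findlev]; [lia|]. destruct Nat.leb; lia. Qed.

Lemma findlev_ok a b k : a <= b -> a <= b / 2^(findlev a b k) * 2^(findlev a b k).
Proof.
  intros H. induction k.
  - change (findlev a b 0) with 0. change (2^0) with 1. rewrite Nat.div_1_r. lia.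
  - cbn [findlev]. destruct (Nat.leb a (b / 2^(S k) * 2^(S k))) eqn:E.
    + apply Nat.leb_le in E. exact E.
    + exact IHk.
Qed.

Lemma findlev_max a b k : forall j, findlev a b k < j <= k -> b / 2^j * 2^j < a.
Proof.
  induction k; cbn [findlev]; intros j Hj; [lia|].
  destruct (Nat.leb a (b / 2^(S k) * 2^(S k))) eqn:E; [lia|].
  destruct (Nat.eq_dec j (S k)) as [->|Hn].
  - apply Nat.leb_gt in E. exact E.
  - apply IHk. lia.
Qed.

Lemma pow2_pos j : 2^j <> 0.
Proof. apply Nat.pow_nonzero. lia. Qed.

Lemma divmul_le b d : d <> 0 -> b / d * d <= b.
Proof. intros. rewrite Nat.mul_comm. apply Nat.Div0.mul_div_le. Qed.

Lemma divmul_ge s b d : d <> 0 -> s * d <= b -> s * d <= b / d * d.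
Proof.
  intros Hd H. apply Nat.mul_le_mono_r. apply Nat.div_le_lower_bound; auto. lia.
Qed.

Lemma sameq_dir a b a' b' K l :
  a <= b -> a' <= b' -> a <= b' -> a' <= b ->
  l = findlev a b K -> l = findlev a' b' K -> b' < 2^K ->
  b / 2^l < b' / 2^l -> False.
Proof.
  intros H1 H2 H3 H4 El El' HK Hq.
  pose proof (pow2_pos l) as Pn.
  set (P := 2^l) in *. set (q := b / P) in *. set (q' := b' / P) in *.
  assert (Ha : a <= q * P) by (unfold q, P; rewrite El; apply findlev_ok; auto).
  assert (Ha' : a' <= q' * P) by (unfold q', P; rewrite El'; apply findlev_ok; auto).
  assert (Hb : q * P <= b) by (apply divmul_le; auto).
  assert (Hb' : q' * P <= b') by (apply divmul_le; auto).
  assert (HlK : l < K).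
  { destruct (Nat.lt_ge_cases l K) as [|HKl]; auto. exfalso.
    assert (2^K <= 2^l) by (apply Nat.pow_le_mono_r; lia).
    assert (1 * P <= q' * P) by (apply Nat.mul_le_mono_r; lia). unfold P in *. lia. }
  assert (M1 : b / 2^(S l) * 2^(S l) < a).
  { apply (findlev_max a b K). rewrite <- El. lia. }
  assert (M2 : b' / 2^(S l) * 2^(S l) < a').
  { apply (findlev_max a' b' K). rewrite <- El'. lia. }
  set (s := (q + 1) / 2).
  assert (Hs : q <= 2 * s <= q + 1).
  { pose proof (Nat.div_mod_eq (q+1) 2). pose proof (Nat.mod_upper_bound (q+1) 2). unfold s. lia. }
  assert (HP2 : 2^(S l) = 2 * P) by reflexivity.
  assert (X1 : q * P <= (2*s) * P) by (apply Nat.mul_le_mono_r; lia).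
  assert (X2 : (2*s) * P <= q' * P) by (apply Nat.mul_le_mono_r; lia).
  assert (Hx : (2*s)*P = s * 2^(S l)) by (rewrite HP2; lia).
  destruct (Nat.le_gt_cases (s * 2^(S l)) b) as [Hle|Hgt].
  - pose proof (divmul_ge s b (2^(S l)) (pow2_pos _) Hle). lia.
  - assert (s * 2^(S l) <= b') by lia.
    pose proof (divmul_ge s b' (2^(S l)) (pow2_pos _) H). lia.
Qed.

Lemma sameq a b a' b' K l :
  a <= b -> a' <= b' -> a <= b' -> a' <= b ->
  l = findlev a b K -> l = findlev a' b' K -> b < 2^K -> b' < 2^K ->
  b / 2^l = b' / 2^l.
Proof.
  intros. destruct (Nat.lt_trichotomy (b / 2^l) (b' / 2^l)) as [Hq|[Hq|Hq]]; auto; exfalso.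
  - exact (sameq_dir a b a' b' K l H H0 H1 H2 H3 H4 H6 Hq).
  - exact (sameq_dir a' b' a b K l H0 H H2 H1 H4 H3 H5 Hq).
Qed.

Lemma findlev_pow a b K : 1 <= a -> a <= b -> 2 ^ findlev a b K <= b.
Proof.
  intros H1 H2. pose proof (findlev_ok a b K H2). pose proof (pow2_pos (findlev a b K)).
  pose proof (divmul_le b (2 ^ findlev a b K) H0).
  set (P := 2 ^ findlev a b K) in *. set (q := b / P) in *.
  assert (1 <= q) by (destruct q; lia).
  assert (1 * P <= q * P) by (apply Nat.mul_le_mono_r; lia). lia.
Qed.
Open Scope R_scope.

Definition ovl (lo hi : nat -> R) (i j : nat) : Prop := lo i <= hi j /\ lo j <= hi i.

Definition ILprop (lo hi : nat -> R) (S : list nat) (c : nat -> nat) (beta : nat) : Prop :=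
  (beta = 1 \/ beta = 2)%nat /\ (forall w, (c w <= 2)%nat) /\
  (forall v, In v S -> exists u, In u S /\ ovl lo hi v u /\ c u <> 0%nat /\
      forall w, In w S -> ovl lo hi v w -> w <> u -> c w <> c u) /\
  (forall t, (forall w, In w S -> t <= hi w) -> forall w, In w S -> lo w <= t ->
      c w = 0%nat \/ c w = beta) /\
  (forall t, (forall w, In w S -> t <= hi w) -> forall v, In v S -> lo v <= t ->
      exists u, In u S /\ ovl lo hi v u /\ c u = beta /\
        forall w, In w S -> ovl lo hi v w -> w <> u -> c w <> beta).

Lemma argmin_ex (f : nat -> R) (l : list nat) : l <> nil ->
  exists m, In m l /\ forall w, In w l -> f m <= f w.
Proof.
  induction l as [|a l IH]; intros H; [congruence|].
  destruct l as [|b l'].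
  - exists a; split; [left; auto|]. intros w [Hw|[]]; subst; lra.
  - destruct IH as [m [Hm Hmin]]; [discriminate|].
    destruct (Rle_dec (f a) (f m)).
    + exists a; split; [left; auto|]. intros w [Hw|Hw]; [subst; lra|].
      specialize (Hmin w Hw); lra.
    + exists m; split; [right; auto|]. intros w [Hw|Hw]; [subst; lra|auto].
Qed.

Lemma filter_lt {A} (f : A -> bool) (l : list A) x :
  In x l -> f x = false -> (length (filter f l) < length l)%nat.
Proof.
  induction l as [|a l IH]; simpl; intros Hx Hf; [destruct Hx|].
  destruct Hx as [<-|Hx].
  - rewrite Hf. pose proof (filter_length_le f l). lia.
  - destruct (f a); simpl; specialize (IH Hx Hf); lia.
Qed.

Lemma IL_main (lo hi : nat -> R) : forall N (S : list nat), (length S <= N)%nat ->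
  (forall i, In i S -> lo i <= hi i) -> exists c beta, ILprop lo hi S c beta.
Proof.
  induction N as [|N IHN]; intros S HL Hwf.
  - destruct S; [|simpl in HL; lia].
    exists (fun _ => 0%nat), 1%nat. repeat split; auto; intros; simpl in *; tauto.
  - destruct S as [|s0 S0].
    { exists (fun _ => 0%nat), 1%nat. repeat split; auto; intros; simpl in *; tauto. }
    set (S := s0 :: S0) in *.
    destruct (argmin_ex hi S) as [m [HmS Hm]]; [discriminate|].
    set (C1 := filter (fun w => if Rle_dec (lo w) (hi m) then true else false) S).
    assert (HmC : In m C1).
    { apply filter_In; split; auto. destruct Rle_dec as [_|Hn]; [reflexivity|exfalso; apply Hn, Hwf; auto]. }
    destruct (argmin_ex (fun w => - hi w) C1) as [e [HeC He]]; [intro Hc; rewrite Hc in HmC; destruct HmC|].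
    apply filter_In in HeC. destruct HeC as [HeS HeC].
    assert (Hloe : lo e <= hi m) by (destruct Rle_dec; [auto|discriminate]).
    assert (F2 : forall w, In w S -> lo w <= hi m -> hi w <= hi e).
    { intros w Hw Hlw. assert (In w C1) by (apply filter_In; split; auto; destruct (Rle_dec (lo w) (hi m)) as [_|Hn]; [reflexivity|contradiction]).
      specialize (He w H). lra. }
    set (S' := filter (fun w => if Rlt_dec (hi e) (hi w) then true else false) S).
    assert (HS' : forall w, In w S' <-> In w S /\ hi e < hi w).
    { intro w. unfold S'. rewrite filter_In. destruct Rlt_dec; split; intros [A B]; auto; try discriminate; tauto. }
    assert (HL' : (length S' <= N)%nat).
    { assert (length S' < length S)%nat.
      { apply filter_lt with e; auto. destruct (Rlt_dec (hi e) (hi e)); auto. lra. }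
      lia. }
    destruct (IHN S' HL') as [c' [b' [Hb' [Hc'2 [CF' [I1' I2']]]]]].
    { intros i Hi; apply Hwf; apply HS'; auto. }
    set (alpha := (3 - b')%nat).
    assert (Ha1 : alpha <> 0%nat) by (unfold alpha; lia).
    assert (Ha2 : alpha <> b') by (unfold alpha; lia).
    assert (Hb0 : b' <> 0%nat) by lia.
    set (c := fun w => if in_dec Nat.eq_dec w S' then c' w else if Nat.eq_dec w e then alpha else 0%nat).
    assert (HeS' : ~ In e S') by (rewrite HS'; lra).
    assert (Hce : c e = alpha).
    { unfold c. destruct in_dec; [contradiction|]. destruct Nat.eq_dec; congruence. }
    assert (Hcin : forall w, In w S' -> c w = c' w).
    { intros w Hw; unfold c; destruct in_dec; [auto|contradiction]. }
    assert (Hcout : forall w, ~ In w S' -> w <> e -> c w = 0%nat).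
    { intros w Hw Hwe; unfold c; destruct in_dec; [contradiction|]. destruct Nat.eq_dec; congruence. }
    assert (Hhi : forall t, (forall w, In w S' -> t <= hi w) -> True) by auto.
    assert (Hall' : forall w, In w S' -> hi e <= hi w) by (intros w Hw; apply HS' in Hw; lra).
    assert (K1 : forall w, In w S' -> lo w <= hi e -> c w <> alpha).
    { intros w Hw Hlw. rewrite Hcin by auto.
      destruct (I1' (hi e) Hall' w Hw Hlw) as [H|H]; rewrite H; auto. }
    assert (We : forall v, In v S -> hi v <= hi e ->
              exists u, In u S /\ ovl lo hi v u /\ c u = alpha /\
                forall w, In w S -> ovl lo hi v w -> w <> u -> c w <> alpha).
    { intros v Hv Hve. exists e. split; [auto|]. split.
      { split. - pose proof (Hwf v Hv); lra. - pose proof (Hm v Hv); lra. }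
      split; [auto|]. intros w Hw [Ow1 Ow2] Hwe.
      destruct (in_dec Nat.eq_dec w S') as [HwS'|HwS'].
      - apply K1; auto. pose proof (Hwf v Hv); lra.
      - rewrite Hcout; auto. }
    exists c, alpha. split; [unfold alpha; lia|]. split.
    { intro w. unfold c. destruct in_dec; [auto|]. destruct Nat.eq_dec; unfold alpha; lia. }
    split; [|split].
    + intros v Hv. destruct (in_dec Nat.eq_dec v S') as [HvS'|HvS'].
      * destruct (Rle_dec (lo v) (hi e)) as [Hle|Hgt].
        -- destruct (I2' (hi e) Hall' v HvS' Hle) as [u [Hu [Ou [Cu Uu]]]].
           exists u. split; [apply HS'; auto|]. split; [auto|].
           rewrite Hcin by auto. split; [congruence|].
           intros w Hw Ow Hwu. rewrite Cu.
           destruct (in_dec Nat.eq_dec w S') as [HwS'|HwS'].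
           ++ rewrite Hcin by auto. apply Uu; auto.
           ++ destruct (Nat.eq_dec w e) as [->|Hwe]; [rewrite Hce; auto|rewrite Hcout; auto].
        -- destruct (CF' v HvS') as [u [Hu [Ou [Cu Uu]]]].
           exists u. split; [apply HS'; auto|]. split; [auto|].
           rewrite Hcin by auto. split; [auto|].
           intros w Hw Ow Hwu.
           destruct (in_dec Nat.eq_dec w S') as [HwS'|HwS'].
           ++ rewrite Hcin by auto. apply Uu; auto.
           ++ exfalso. assert (hi w <= hi e).
              { destruct (Rle_dec (hi w) (hi e)); auto. exfalso; apply HwS'; apply HS'; split; auto; lra. }
              destruct Ow; lra.
      * assert (hi v <= hi e).
        { destruct (Rle_dec (hi v) (hi e)); auto. exfalso; apply HvS'; apply HS'; split; auto; lra. }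
        destruct (We v Hv H) as [u [Hu [Ou [Cu Uu]]]].
        exists u. split; [auto|]. split; [auto|]. split; [congruence|].
        intros w Hw Ow Hwu. rewrite Cu. apply Uu; auto.
    + intros t Ht w Hw Hlw. assert (t <= hi m) by (apply Ht; auto).
      assert (hi w <= hi e) by (apply F2; auto; lra).
      assert (~ In w S') by (rewrite HS'; lra).
      destruct (Nat.eq_dec w e) as [->|Hwe]; [right; auto|left; apply Hcout; auto].
    + intros t Ht v Hv Hlv. assert (t <= hi m) by (apply Ht; auto).
      apply We; auto. apply F2; auto; lra.
Qed.

Lemma IL_cf (lo hi : nat -> R) (S : list nat) :
  (forall i, In i S -> lo i <= hi i) ->
  exists c, (forall w, (c w <= 2)%nat) /\
  (forall v, In v S -> exists u, In u S /\ ovl lo hi v u /\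
      forall w, In w S -> ovl lo hi v w -> w <> u -> c w <> c u).
Proof.
  intros H. destruct (IL_main lo hi (length S) S (le_n _) H) as [c [b [_ [H2 [H3 _]]]]].
  exists c. split; auto. intros v Hv. destruct (H3 v Hv) as [u [A [B [_ D]]]]. eauto.
Qed.

Definition rk (l : list R) (x : R) : nat :=
  length (filter (fun e => if Rlt_dec e x then true else false) l).

Lemma rk_mono l x y : x <= y -> (rk l x <= rk l y)%nat.
Proof.
  intros H. unfold rk. induction l as [|a l IH]; simpl; [lia|].
  destruct (Rlt_dec a x); destruct (Rlt_dec a y); simpl; try lia. lra.
Qed.

Lemma rk_strict l e x : In e l -> e < x -> (rk l e < rk l x)%nat.
Proof.
  intros Hin H. induction l as [|a l IH]; [destruct Hin|].
  pose proof (rk_mono l e x (Rlt_le _ _ H)) as Hm. unfold rk in *. simpl.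
  destruct Hin as [->|Hin].
  - destruct (Rlt_dec e e); [lra|]. destruct (Rlt_dec e x); [|lra]. simpl. lia.
  - specialize (IH Hin). destruct (Rlt_dec a e); destruct (Rlt_dec a x); simpl; try lia. lra.
Qed.

Lemma rk_len l x : (rk l x <= length l)%nat.
Proof. unfold rk. apply filter_length_le. Qed.

Definition xs (F : nat -> rect) (n : nat) : list R :=
  map (fun j => rx1 (F j)) (seq 0 n) ++ map (fun j => rx2 (F j)) (seq 0 n).

Theorem theorem1p6 :
  exists C : R,
    forall (n : nat) (F : nat -> rect),
      (2 <= n)%nat ->
      (forall i, (i < n)%nat -> rect_wf (F i)) ->
      (forall i j, (i < n)%nat -> (j < n)%nat -> F i = F j -> i = j) ->
      forall k : nat, is_chi_cf_cn n (rect_adj F) k ->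
        INR k <= C * ln (INR n).
Proof.
  exists 24. intros n F Hn Hwf _ k [_ Hmin].
  set (E := xs F n).
  set (aA := fun j => S (rk E (rx1 (F j)))).
  set (bB := fun j => S (rk E (rx2 (F j)))).
  set (K := (2 * n + 2)%nat).
  set (lev := fun j => findlev (aA j) (bB j) K).
  set (qq := fun j => (bB j / 2 ^ lev j)%nat).
  set (Gr := fun (p : nat * nat) => filter (fun j => andb (Nat.eqb (lev j) (fst p)) (Nat.eqb (qq j) (snd p))) (seq 0 n)).
  set (lo := fun j => ry1 (F j)). set (hi := fun j => ry2 (F j)).
  set (L := Nat.log2 (2 * n + 1)).
  assert (HGr : forall p j, In j (Gr p) <-> (j < n)%nat /\ lev j = fst p /\ qq j = snd p).
  { intros p j. unfold Gr. rewrite filter_In, in_seq, Bool.andb_true_iff, !Nat.eqb_eq. lia. }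
  assert (HG : forall p, exists c, (forall w, (c w <= 2)%nat) /\
     (forall v, In v (Gr p) -> exists u, In u (Gr p) /\ ovl lo hi v u /\
        forall w, In w (Gr p) -> ovl lo hi v w -> w <> u -> c w <> c u)).
  { intros p. apply IL_cf. intros i Hi. apply HGr in Hi. apply Hwf. lia. }
  set (Cf := fun p => proj1_sig (constructive_indefinite_description _ (HG p))).
  assert (HCf : forall p, (forall w, (Cf p w <= 2)%nat) /\
     (forall v, In v (Gr p) -> exists u, In u (Gr p) /\ ovl lo hi v u /\
        forall w, In w (Gr p) -> ovl lo hi v w -> w <> u -> Cf p w <> Cf p u)).
  { intros p. exact (proj2_sig (constructive_indefinite_description _ (HG p))). }
  set (col := fun j => (3 * lev j + Cf (lev j, qq j) j)%nat).
  assert (HEl : length E = (n + n)%nat).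
  { unfold E, xs. rewrite length_app, !length_map, length_seq. reflexivity. }
  assert (Hab : forall j, (j < n)%nat -> (aA j <= bB j)%nat).
  { intros j Hj. unfold aA, bB. destruct (Hwf j Hj). pose proof (rk_mono E _ _ H). lia. }
  assert (HbB : forall j, (bB j <= 2 * n + 1)%nat).
  { intros j. unfold bB. pose proof (rk_len E (rx2 (F j))). lia. }
  assert (HbK : forall j, (bB j < 2 ^ K)%nat).
  { intros j. pose proof (HbB j). pose proof (Nat.pow_gt_lin_r 2 K). unfold K in *. lia. }
  assert (HlevL : forall j, (j < n)%nat -> (lev j <= L)%nat).
  { intros j Hj. unfold L. apply Nat.log2_le_pow2; [lia|].
    pose proof (findlev_pow (aA j) (bB j) K). pose proof (Hab j Hj). pose proof (HbB j).
    unfold lev. assert (1 <= aA j)%nat by (unfold aA; lia). lia. }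
  assert (Hmeet : forall i j, rect_meet (F i) (F j) -> (aA i <= bB j)%nat).
  { intros i j [x [y [[[A1 A2] _] [[B1 B2] _]]]]. unfold aA, bB.
    assert (Hx : rx1 (F i) <= rx2 (F j)) by lra. pose proof (rk_mono E _ _ Hx). lia. }
  assert (Hinx2 : forall j, (j < n)%nat -> In (rx2 (F j)) E).
  { intros j Hj. unfold E, xs. apply in_or_app. right. apply (in_map (fun j => rx2 (F j))). apply in_seq. lia. }
  assert (Hkeyx : forall i j, (i < n)%nat -> (j < n)%nat -> lev i = lev j -> qq i = qq j ->
             rx1 (F i) <= rx2 (F j)).
  { intros i j Hi Hj Hl Hq. destruct (Rle_dec (rx1 (F i)) (rx2 (F j))) as [|Hc]; auto. exfalso.
    apply Rnot_le_lt in Hc.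
    pose proof (rk_strict E _ _ (Hinx2 j Hj) Hc).
    pose proof (findlev_ok (aA i) (bB i) K (Hab i Hi)).
    pose proof (divmul_le (bB j) (2 ^ lev j) (pow2_pos _)).
    fold (lev i) in H0. unfold qq in Hq. rewrite Hl in H0, Hq. rewrite Hq in H0.
    unfold aA, bB in *. lia. }
  assert (Hkeyq : forall i j, (i < n)%nat -> (j < n)%nat -> lev i = lev j ->
             rect_meet (F i) (F j) -> qq i = qq j).
  { intros i j Hi Hj Hl Hm. unfold qq. rewrite Hl.
    assert (rect_meet (F j) (F i)) by (destruct Hm as [x [y [A B]]]; exists x, y; auto).
    apply (sameq (aA i) (bB i) (aA j) (bB j) K); auto. }
  assert (Hcol : cf_cn_coloring n (rect_adj F) (3 * (L + 1)) col).
  { split.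
    - intros v Hv. unfold col. pose proof (HlevL v Hv). pose proof (proj1 (HCf (lev v, qq v)) v). lia.
    - intros v Hv. set (p := (lev v, qq v)).
      assert (HvG : In v (Gr p)) by (apply HGr; simpl; auto).
      destruct (proj2 (HCf p) v HvG) as [u [HuG [Ouv Uu]]].
      apply HGr in HuG. destruct HuG as [Hu [Hlu Hqu]]. simpl in Hlu, Hqu.
      assert (Hxu : rx1 (F v) <= rx2 (F u) /\ rx1 (F u) <= rx2 (F v)).
      { split; apply Hkeyx; auto. }
      exists u. split.
      + split; auto. destruct (Nat.eq_dec u v) as [|Huv]; [left; auto|right].
        split; [auto|]. destruct Ouv as [O1 O2]. unfold lo, hi in *.
        destruct (Hwf v Hv), (Hwf u Hu).
        exists (Rmax (rx1 (F v)) (rx1 (F u))), (Rmax (ry1 (F v)) (ry1 (F u))).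
        unfold in_rect, Rmax. destruct Rle_dec; destruct Rle_dec; lra.
      + intros w [Hw Hvw] Hwu Hc.
        assert (Hcu : col u = (3 * lev v + Cf p u)%nat) by (unfold col, p; rewrite Hlu, Hqu; reflexivity).
        pose proof (proj1 (HCf (lev w, qq w)) w). pose proof (proj1 (HCf p) u).
        rewrite Hcu in Hc. unfold col in Hc.
        assert (Hlw : lev w = lev v) by lia.
        assert (Hqw : qq w = qq v).
        { destruct Hvw as [->|[_ Hm]]; auto. symmetry. apply Hkeyq; auto. }
        assert (Hwp : (lev w, qq w) = p) by (unfold p; rewrite Hlw, Hqw; reflexivity).
        rewrite Hwp in Hc.
        assert (Ow : ovl lo hi v w).
        { destruct Hvw as [Heq|[_ Hm]].
          - rewrite Heq. destruct (Hwf v Hv). split; unfold lo, hi; lra.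
          - destruct Hm as [x [y [[_ [A1 A2]] [_ [B1 B2]]]]]. split; unfold lo, hi; lra. }
        apply (Uu w); auto. apply HGr. simpl. auto. lia. }
  pose proof (Hmin _ _ Hcol) as Hk.
  set (L2 := Nat.log2 n).
  assert (HL : (L <= L2 + 2)%nat).
  { unfold L, L2. assert (2 * n + 1 <= 2 * (2 * n))%nat by lia.
    pose proof (Nat.log2_le_mono _ _ H). rewrite !Nat.log2_double in H0 by lia. lia. }
  assert (Hk2 : (k <= 3 * L2 + 9)%nat) by lia.
  apply le_INR in Hk2. rewrite plus_INR, mult_INR in Hk2.
  assert (H2n : 2 ^ L2 <= INR n).
  { replace 2 with (INR 2) by (simpl; lra). rewrite <- pow_INR. apply le_INR. apply Nat.log2_spec. lia. }
  assert (Hln : INR L2 * ln 2 <= ln (INR n)).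
  { rewrite <- ln_pow by lra. assert (0 < 2 ^ L2) by (apply pow_lt; lra).
    destruct (Rle_lt_or_eq_dec _ _ H2n) as [Hlt|Heq]; [left; apply ln_increasing; auto|right; rewrite Heq; auto]. }
  assert (Hln2 : ln 2 <= ln (INR n)).
  { assert (2 <= INR n) by (replace 2 with (INR 2) by (simpl; lra); apply le_INR; auto).
    destruct (Rle_lt_or_eq_dec _ _ H) as [Hlt|Heq]; [left; apply ln_increasing; lra|right; rewrite Heq; auto]. }
  pose proof ln_lt_2. pose proof (pos_INR L2).
  simpl in Hk2.
  assert (INR k * ln 2 <= 12 * ln (INR n)).
  { apply Rle_trans with ((3 * INR L2 + 9) * ln 2). apply Rmult_le_compat_r; lra. nra. }
  nra.
Qed.
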